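(* Let $G=(V,E)$ be a connected, $d$-regular graph on $n$ vertices with adjacency matrix $A$, let $D=d\cdot I_n$, and let $\{\phi_1,\dots,\phi_n\}\subset\mathbb{R}^n$ be an orthonormal basis of eigenvectors of the symmetric matrix $AD^{-1}$, where $\phi_i$ has eigenvalue $\lambda_i$, the eigenvalues are ordered as $1=\lambda_1\geq|\lambda_2|\geq\dots\geq|\lambda_n|\geq 0$, and $\phi_1 = \frac{1}{\sqrt n}(1,\dots,1)$. Let $1\leq \ell\leq n-1$. Then there exist a subset $U\subset V$ with $\#U\leq \ell$ and nonnegative weights $a_u\geq 0$ ($u\in U$) such that for all functions $f:V\to\mathbb{R}$, $$\left|\frac{1}{|V|}\sum_{v\in V} f(v) - \sum_{u\in U} a_u f(u)\right| \leq \left(\sum_{i=\ell+1}^n \langle \phi_i, f\rangle^2\right)^{1/2}.$$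
   Context: Functions $f:V\to\mathbb{R}$ are identified with vectors in $\mathbb{R}^n$ indexed by the vertices, and $\langle\cdot,\cdot\rangle$ is the standard inner product on $\mathbb{R}^n$. *)

(* Defs.v *)
From HB Require Import structures.
From mathcomp Require Import all_boot all_order all_algebra.
Set Implicit Arguments. Unset Strict Implicit. Unset Printing Implicit Defensive.
Import Order.TTheory GRing.Theory Num.Theory.
Local Open Scope ring_scope.

Definition simple_graph (n : nat) (e : rel 'I_n) : Prop :=
  symmetric e /\ irreflexive e.

Definition connected_graph (n : nat) (e : rel 'I_n) : Prop :=
  forall u v : 'I_n, connect e u v.

Definition regular_graph (n d : nat) (e : rel 'I_n) : Prop :=
  forall v : 'I_n, #|[set w | e v w]| = d.

Definition adjmx (R : nzRingType) (n : nat) (e : rel 'I_n) : 'M[R]_n :=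
  \matrix_(i, j) (e i j)%:R.

Definition dotf (R : nzRingType) (n : nat) (f g : 'I_n -> R) : R :=
  \sum_(v < n) f v * g v.

(* Main.v *)
Require Import Defs.
From HB Require Import structures.
From mathcomp Require Import all_boot all_order all_algebra zify ring lra.
Import Order.TTheory GRing.Theory Num.Theory.
Local Open Scope ring_scope.

Section S.
Variable R : rcfType.

Lemma cs_ineq (I : finType) (Pr : pred I) (x y : I -> R) :
  (\sum_(i | Pr i) x i * y i) ^+ 2 <=
  (\sum_(i | Pr i) x i ^+ 2) * (\sum_(i | Pr i) y i ^+ 2).
Proof.
set Z := \sum_(i | Pr i) x i * y i.
set X := \sum_(i | Pr i) x i ^+ 2.
set Y := \sum_(i | Pr i) y i ^+ 2.
have X0 : 0 <= X by apply: sumr_ge0 => i _; exact: sqr_ge0.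
have Y0 : 0 <= Y by apply: sumr_ge0 => i _; exact: sqr_ge0.
have [Xe|Xn] := eqVneq X 0.
  have hx : forall i, Pr i -> x i = 0.
    move=> i hi; apply/eqP; rewrite -sqrf_eq0; apply/eqP.
    by move: i hi; apply/psumr_eq0P => // i _; exact: sqr_ge0.
  have -> : Z = 0 by rewrite /Z big1 // => i hi; rewrite hx // mul0r.
  by rewrite expr0n /= Xe mul0r.
have Xp : 0 < X by rewrite lt_def Xn X0.
have H : 0 <= \sum_(i | Pr i) (X * y i - Z * x i) ^+ 2.
  by apply: sumr_ge0 => i _; exact: sqr_ge0.
have E : \sum_(i | Pr i) (X * y i - Z * x i) ^+ 2 = X * (X * Y - Z ^+ 2).
  have -> : \sum_(i | Pr i) (X * y i - Z * x i) ^+ 2 =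
     \sum_(i | Pr i) (X ^+ 2 * y i ^+ 2 - (2 * X * Z) * (x i * y i) + Z ^+ 2 * x i ^+ 2).
    by apply: eq_bigr => i _; ring.
  rewrite big_split /= sumrB -!mulr_sumr -/X -/Y -/Z; ring.
rewrite E in H.
rewrite -subr_ge0.
by rewrite pmulr_rge0 in H.
Qed.

Lemma kernel_vec n l (P : 'M[R]_(n, l)) (S : {set 'I_n}) : (l < #|S|)%N ->
  exists mu : 'I_n -> R, (exists v, mu v != 0) /\ (forall v, v \notin S -> mu v = 0)
    /\ (forall i, \sum_v mu v * P v i = 0).
Proof.
move=> hS.
pose D : 'M[R]_(#|S|, n) := \matrix_(j, v) (v == enum_val j)%:R.
pose C := D *m P.
have rk : (0 < \rank (kermx C))%N.
  by rewrite mxrank_ker; have := rank_leq_col C; lia.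
set y := nz_row (kermx C).
have y0 : y != 0 by rewrite nz_row_eq0 -mxrank_eq0 -lt0n.
have yC : y *m C = 0 by apply/sub_kermxP; exact: nz_row_sub.
have [j0 hj0] : exists j, y 0 j != 0.
  case: (pickP (fun j => y 0 j != 0)) => [j hj|h]; first by exists j.
  move/negP: y0; case; apply/eqP/matrixP => i j; rewrite ord1 mxE.
  by move/negbFE/eqP: (h j).
exists (fun v => (y *m D) 0 v); split.
  exists (enum_val j0); rewrite !mxE (bigD1 j0) //= mxE eqxx mulr1 big1 ?addr0 //.
  move=> j hj; rewrite mxE (inj_eq enum_val_inj) eq_sym (negbTE hj) mulr0 //.
split.
  move=> v hv; rewrite !mxE big1 // => j _; rewrite mxE.
  case: eqP => [e|]; last by rewrite mulr0.
  by move: (enum_valP j); rewrite -e (negbTE hv).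
move=> i; move: yC; rewrite /C mulmxA => /matrixP/(_ 0 i).
by rewrite [RHS]mxE mxE.
Qed.


Lemma carath n l (P : 'M[R]_(n, l)) :
  (forall mu : 'I_n -> R, (forall i, \sum_v mu v * P v i = 0) -> \sum_v mu v = 0) ->
  forall k (w : 'I_n -> R), #|[set v | w v != 0]| = k -> (forall v, 0 <= w v) ->
  exists a : 'I_n -> R, (forall v, 0 <= a v) /\ (#|[set v | a v != 0%R]| <= l)%N /\
     forall i, \sum_v a v * P v i = \sum_v w v * P v i.
Proof.
move=> hP k; elim/ltn_ind: k => k IH w hk hw.
set S := [set v | w v != 0] in hk.
case: (leqP #|S| l) => hSl; first by exists w; split => //; split.
have [mu [[v1 hv1] [hmuS hmuP]]] := @kernel_vec n l P S hSl.
have hsum := hP mu hmuP.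
have [vp hvp] : exists v, 0 < mu v.
  case: (pickP (fun v => 0 < mu v)) => [v hv|h]; first by exists v.
  exfalso; move/eqP: hv1; apply.
  have hn : forall v, 0 <= - mu v by move=> v; rewrite oppr_ge0 leNgt h.
  have hs : \sum_(v | predT v) - mu v = 0 by rewrite sumrN hsum oppr0.
  have := @psumr_eq0P _ _ predT (fun v => - mu v) (fun v _ => hn v) hs v1 isT.
  by move/eqP; rewrite oppr_eq0 => /eqP.
case: (@arg_minP _ _ _ vp (fun v => 0 < mu v) (fun v => w v / mu v) hvp) => v0 hv0 hmin.
pose t := w v0 / mu v0.
have hw0 : w v0 != 0.
  apply/negP => /eqP e; have : v0 \notin S by rewrite inE e eqxx.
  by move/hmuS => m0; move: hv0; rewrite m0 ltxx.
have t0 : 0 <= t by rewrite /t divr_ge0 // ltW.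
pose w' := fun v => w v - t * mu v.
have hw' : forall v, 0 <= w' v.
  move=> v; rewrite /w' subr_ge0.
  case: (ltP 0 (mu v)) => hm.
    by have := hmin v hm; rewrite -/t ler_pdivlMr.
  by apply: le_trans (hw v); rewrite mulr_ge0_le0.
have hprop : [set v | w' v != 0] \proper S.
  apply/properP; split.
    apply/subsetP => v; rewrite !inE; apply: contra => /eqP e.
    have : v \notin S by rewrite inE e eqxx.
    by move/hmuS => m0; rewrite /w' e m0 mulr0 subr0.
  exists v0; first by rewrite inE.
  by rewrite inE negbK /w' /t mulfVK ?subrr // gt_eqF.
have hlt : (#|[set v | w' v != 0%R]| < k)%N by rewrite -hk; exact: proper_card.
have [a [ha [hal hamom]]] := IH _ hlt w' erefl hw'.
exists a; split => //; split => // i.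
rewrite hamom /w'.
under eq_bigr do rewrite mulrBl -mulrA.
by rewrite sumrB -mulr_sumr hmuP mulr0 subr0.
Qed.

End S.
Theorem proposition3 (R : rcfType) (n d : nat) (e : rel 'I_n)
    (Phi : 'M[R]_n) (lambda : 'I_n -> R) (l : nat) :
  simple_graph e ->
  connected_graph e ->
  regular_graph d e ->
  (* orthonormal basis of R^n *)
  Phi^T *m Phi = 1%:M ->
  (* eigenvectors of A D^{-1}, D = d I_n *)
  (forall i : 'I_n,
     (adjmx R e *m invmx ((d%:R : R)%:M)) *m col i Phi = lambda i *: col i Phi) ->
  (* ordering 1 = lambda_1 >= |lambda_2| >= ... >= |lambda_n| >= 0 *)
  (forall i0 : 'I_n, val i0 = 0%N -> lambda i0 = 1) ->
  (forall i j : 'I_n, (i <= j)%N -> `|lambda j| <= `|lambda i|) ->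
  (* phi_1 = (1/sqrt n)(1,...,1) *)
  (forall i0 : 'I_n, val i0 = 0%N -> forall v : 'I_n, Phi v i0 = (Num.sqrt (n%:R : R))^-1) ->
  (1 <= l <= n - 1)%N ->
  exists U : {set 'I_n}, (#|U| <= l)%N /\
  exists a : 'I_n -> R, (forall u, u \in U -> 0 <= a u) /\
  forall f : 'I_n -> R,
    `| (n%:R)^-1 * \sum_(v < n) f v - \sum_(u in U) a u * f u |
      <= Num.sqrt (\sum_(i < n | (l <= i)%N) (dotf (fun v => Phi v i) f) ^+ 2).
Proof.
move=> _ _ _ hO _ _ _ hphi1 /andP[hl1 hln].
have hln' : (l <= n)%N by lia.
have n0 : (0 < n)%N by lia.
pose P : 'M[R]_(n, l) := \matrix_(v, i) Phi v (widen_ord hln' i).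
pose j0 : 'I_l := Ordinal hl1.
pose c := (Num.sqrt (n%:R : R))^-1.
have hnR : (n%:R : R) != 0 by rewrite pnatr_eq0 -lt0n.
have c0 : c != 0.
  by rewrite /c invr_eq0 sqrtr_eq0 -ltNge ltr0n.
have hPc : forall v, P v j0 = c by move=> v; rewrite mxE; apply: hphi1.
have hPs : forall b : 'I_n -> R, \sum_v b v * P v j0 = (\sum_v b v) * c.
  by move=> b; rewrite mulr_suml; apply: eq_bigr => v _; rewrite hPc.
have hP : forall mu : 'I_n -> R, (forall i, \sum_v mu v * P v i = 0) -> \sum_v mu v = 0.
  move=> mu /(_ j0); rewrite hPs => /eqP; rewrite mulf_eq0 (negbTE c0) orbF.
  by move/eqP.
have hw : forall v : 'I_n, 0 <= (fun _ => (n%:R : R)^-1) v.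
  by move=> v; rewrite invr_ge0 ler0n.
have [a [ha [hal hmom]]] := @carath R n l P hP _ (fun _ => (n%:R : R)^-1) erefl hw.
exists [set v | a v != 0]; split => //.
exists a; split => // f.
have hsw : \sum_(v < n) (n%:R : R)^-1 = 1.
  by rewrite sumr_const card_ord -[LHS]mulr_natr mulVf.
have hA : \sum_v a v = 1.
  by have := hmom j0; rewrite !hPs => /(mulIf c0) ->.
have hO' := mulmx1C hO.
have hortho : forall u v, \sum_i Phi v i * Phi u i = (v == u)%:R.
  move=> u v; move/matrixP: hO' => /(_ v u); rewrite !mxE => <-.
  by apply: eq_bigr => i _; rewrite mxE.
pose q v := (n%:R : R)^-1 - a v.
pose cc i := \sum_v Phi v i * f v.
pose s i := \sum_v q v * Phi v i.
have step1 : (n%:R)^-1 * \sum_(v < n) f v - \sum_(u in [set v | a v != 0]) a u * f u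
    = \sum_v q v * f v.
  have -> : \sum_(u in [set v | a v != 0]) a u * f u = \sum_v a v * f v.
    rewrite big_mkcond; apply: eq_bigr => v _; rewrite inE.
    by case: (eqVneq (a v) 0) => [->|] //=; rewrite mul0r.
  rewrite mulr_sumr -sumrB; apply: eq_bigr => v _; by rewrite mulrBl.
have hf : forall v, f v = \sum_i Phi v i * cc i.
  move=> v; rewrite /cc.
  under eq_bigr do rewrite mulr_sumr.
  rewrite exchange_big /=.
  under eq_bigr do (under eq_bigr do rewrite mulrA; rewrite -mulr_suml hortho).
  rewrite (bigD1 v) //= eqxx mul1r big1 ?addr0 // => u hu.
  by rewrite eq_sym (negbTE hu) mul0r.
have step2 : \sum_v q v * f v = \sum_i cc i * s i.
  under eq_bigr do rewrite hf mulr_sumr.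
  rewrite exchange_big /=; apply: eq_bigr => i _; rewrite /s mulr_sumr.
  by apply: eq_bigr => v _; ring.
have hs0 : forall i : 'I_n, ~~ (l <= i)%N -> s i = 0.
  move=> i; rewrite -ltnNge => hi.
  have hw' : widen_ord hln' (Ordinal hi) = i by apply: val_inj.
  have EE : forall b : 'I_n -> R, \sum_v b v * P v (Ordinal hi) = \sum_v b v * Phi v i.
    by move=> b; apply: eq_bigr => v _; rewrite mxE hw'.
  have := hmom (Ordinal hi); rewrite !EE => E.
  rewrite /s /q; under eq_bigr do rewrite mulrBl.
  by rewrite sumrB E subrr.
have step3 : \sum_i cc i * s i = \sum_(i < n | (l <= i)%N) cc i * s i.
  rewrite [RHS]big_mkcond; apply: eq_bigr => i _.
  by case: ifP => // /negbT /hs0 ->; rewrite mulr0.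
have hq0 : \sum_v q v = 0 by rewrite sumrB hsw hA subrr.
have step4 : \sum_i s i ^+ 2 = \sum_v q v ^+ 2.
  have -> : \sum_i s i ^+ 2 = \sum_i \sum_v \sum_u q v * q u * (Phi v i * Phi u i).
    apply: eq_bigr => i _; rewrite expr2 /s mulr_suml; apply: eq_bigr => v _.
    rewrite mulr_sumr; apply: eq_bigr => u _; ring.
  rewrite exchange_big /=; apply: eq_bigr => v _.
  rewrite exchange_big /=.
  under eq_bigr do rewrite -mulr_sumr hortho.
  rewrite (bigD1 v) //= eqxx mulr1 big1 ?addr0 ?expr2 // => u hu.
  by rewrite eq_sym (negbTE hu) mulr0.
have hale : forall v, a v <= 1.
  move=> v; rewrite -hA (bigD1 v) //= lerDl; apply: sumr_ge0 => u _; exact: ha.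
have hq1 : \sum_v q v ^+ 2 <= 1.
  have -> : \sum_v q v ^+ 2 = \sum_v ((n%:R : R)^-1 * q v + (a v ^+ 2 - a v * (n%:R)^-1)).
    by apply: eq_bigr => v _; rewrite /q; ring.
  rewrite big_split /= -mulr_sumr hq0 mulr0 add0r -[X in _ <= X]hA.
  apply: ler_sum => v _.
  have h1 : a v ^+ 2 <= a v by rewrite expr2 ler_piMr.
  have h2 : 0 <= a v * (n%:R : R)^-1 by rewrite mulr_ge0 // invr_ge0 ler0n.
  by rewrite lerBlDr (le_trans h1) // lerDl.
have hsl : \sum_(i < n | (l <= i)%N) s i ^+ 2 <= 1.
  apply: le_trans hq1; rewrite -step4 [X in _ <= X](bigID (fun i : 'I_n => (l <= i)%N)) /=.
  by rewrite lerDl; apply: sumr_ge0 => i _; exact: sqr_ge0.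
rewrite step1 step2 step3.
have hX0 : 0 <= \sum_(i < n | (l <= i)%N) (dotf (fun v => Phi v i) f) ^+ 2.
  by apply: sumr_ge0 => i _; exact: sqr_ge0.
rewrite -sqrtr_sqr ler_sqrt //.
apply: (le_trans (@cs_ineq R _ (fun i : 'I_n => (l <= i)%N) cc s)).
rewrite /dotf -/cc.
rewrite -[X in _ <= X]mulr1; apply: ler_wpM2l => //.
Qed.
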